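(* Let $\rho$ be a nonuniform congruence on the symplectic rook monoid $\mathcal{SR}_n$ ($n=2m\ge2$). Then there is either some $k\in\{1,\dots,m\}$ and a normal subgroup $N\unlhd S_k$, or (with $k=n$) a normal subgroup $N\unlhd W$, such that $\rho$ coincides with $\equiv_N$.
   Context: Let $m\ge 1$, $n=2m$, $\mathbf n=\{1,\dots,n\}$, $\theta(i)=n+1-i$, written $\bar i$. A proper subset $I\subset\mathbf n$ is admissible if $I\cap\theta(I)=\emptyset$; $\mathbf n$ and $\emptyset$ are also declared admissible. For an injective partial map $\sigma$ of $\mathbf n$, $I(\sigma)$ is its domain, $J(\sigma)$ its image, $\mathrm{rk}(\sigma)=|I(\sigma)|$; products are compositions of partial maps. $W=\{\sigma\in S_n:\sigma(\bar i)=\overline{\sigma(i)}\ \forall i\}$. $\mathcal{SR}_n$ is the monoid of all injective partial maps $\sigma$ of $\mathbf n$ such that either both $I(\sigma),J(\sigma)$ are proper admissible subsets, or $\sigma\in W$. A congruence is nonuniform if it is not the universal relation. Write $\sigma\mathcal H\tau$ if $I(\sigma)=I(\tau)$ and $J(\sigma)=J(\tau)$. For $k\in\{1,\dots,m\}$ and $N\unlhd S_k$, and for $\sigma\mathcal H\tau$ of rank $k$, ''$\tau=\mu(\sigma)$ with $\mu\in N$'' means: for an enumeration $a_1,\dots,a_k$ of $I(\sigma)$ with $b_i=\sigma(a_i)$, $\tau(a_i)=b_{\mu(i)}$ for all $i$. For $k=n$ and $N\unlhd W$, for $\sigma,\tau$ of rank $n$ it means $\tau=\sigma\mu$ (i.e.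 $\tau(i)=\sigma(\mu(i))$) with $\mu\in N$. The relation $\equiv_N$ on $\mathcal{SR}_n$: if $\mathrm{rk}(\sigma)<k$, then $\sigma\equiv_N\tau$ iff $\mathrm{rk}(\tau)<k$; if $\mathrm{rk}(\sigma)=k$, then $\sigma\equiv_N\tau$ iff $\sigma\mathcal H\tau$ and $\tau=\mu(\sigma)$ for some $\mu\in N$; if $\mathrm{rk}(\sigma)>k$, then $\sigma\equiv_N\tau$ iff $\sigma=\tau$. *)

(* Defs.v *)
(* Points 1..n are modelled by 'I_n = {0,..,n-1};
   theta(i) = n+1-i becomes rev_ord i = n-1-i. *)
From mathcomp Require Import all_boot all_fingroup.
Set Implicit Arguments. Unset Strict Implicit. Unset Printing Implicit Defensive.

Section SR.
Variable n : nat.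

Definition pmap_ := {ffun 'I_n -> option 'I_n}.

Definition theta (i : 'I_n) : 'I_n := rev_ord i.

Definition pinj (s : pmap_) : Prop :=
  forall i j y, s i = Some y -> s j = Some y -> i = j.

Definition dom (s : pmap_) : {set 'I_n} := [set i | s i != None].
Definition img (s : pmap_) : {set 'I_n} := [set j | [exists i, s i == Some j]].
Definition rk (s : pmap_) : nat := #|dom s|.

(* product = composition of partial maps: (s * t)(i) = s (t i) *)
Definition pcomp (s t : pmap_) : pmap_ := [ffun i => obind s (t i)].

Definition admissible (I : {set 'I_n}) : bool :=
  [|| I == setT, I == set0 | [disjoint I & theta @: I]].
Definition proper_admissible (I : {set 'I_n}) : bool :=
  (I \proper setT) && admissible I.

Definition Wset : {set {perm 'I_n}} :=
  [set s : {perm 'I_n} | [forall i, s (theta i) == theta (s i)]].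

Definition inW (s : pmap_) : Prop :=
  exists2 w : {perm 'I_n}, w \in Wset & forall i, s i = Some (w i).

Definition SR (s : pmap_) : Prop :=
  pinj s /\ ((proper_admissible (dom s) /\ proper_admissible (img s)) \/ inW s).

Definition congruence (rho : pmap_ -> pmap_ -> Prop) : Prop :=
  [/\ (forall s, SR s -> rho s s),
      (forall s t, SR s -> SR t -> rho s t -> rho t s),
      (forall s t u, SR s -> SR t -> SR u -> rho s t -> rho t u -> rho s u)
    & (forall s t a, SR s -> SR t -> SR a -> rho s t ->
         rho (pcomp a s) (pcomp a t) /\ rho (pcomp s a) (pcomp t a))].

Definition nonuniform (rho : pmap_ -> pmap_ -> Prop) : Prop :=
  exists s t, [/\ SR s, SR t & ~ rho s t].

Definition Hrel (s t : pmap_) : Prop := dom s = dom t /\ img s = img t.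

Definition equiv_gen (k : nat) (R : pmap_ -> pmap_ -> Prop) (s t : pmap_) : Prop :=
  if rk s < k then is_true (rk t < k)
  else if rk s == k then Hrel s t /\ R s t
  else s = t.

(* rank-k part for N <| S_k, k <= m: tau = mu(sigma) *)
Definition relS (k : nat) (N : {set {perm 'I_k}}) (s t : pmap_) : Prop :=
  exists2 mu, mu \in N &
  exists a : 'I_k -> 'I_n,
    [/\ injective a, (forall x, x \in dom s <-> exists i, a i = x)
      & forall i, t (a i) = s (a (mu i))].

(* rank-n part for N <| W: tau = sigma mu *)
Definition relW (N : {set {perm 'I_n}}) (s t : pmap_) : Prop :=
  exists2 mu, mu \in N & forall i, t i = s (mu i).

Definition equivS (k : nat) (N : {set {perm 'I_k}}) := equiv_gen k (relS N).
Definition equivW (N : {set {perm 'I_n}}) := equiv_gen n (relW N).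

End SR.

(* Main.v *)
Require Import Defs.
From mathcomp Require Import all_boot all_fingroup zify.
From Stdlib Require Import ClassicalEpsilon Classical.
Set Implicit Arguments. Unset Strict Implicit. Unset Printing Implicit Defensive.

Section Basics.
Variables m n : nat.
Hypothesis Hm : 0 < m.
Hypothesis Hn : n = m.*2.

Local Notation pm := (pmap_ n).
Local Notation th := (@theta n).

Lemma n_gt0 : 0 < n. Proof. rewrite Hn; lia. Qed.

Lemma thK (i : 'I_n) : th (th i) = i.
Proof. by apply: val_inj; rewrite /theta /= subnSK // subKn // ltnW. Qed.

Lemma th_neq (i : 'I_n) : th i != i.
Proof.
apply/eqP => /(congr1 val) /=. have := ltn_ord i. move: (nat_of_ord i) => k. rewrite Hn. lia.
Qed.

Lemma th_inj : injective th.
Proof. by move=> i j /(congr1 th); rewrite !thK. Qed.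

Lemma paP (A : {set 'I_n}) :
  reflect (forall i, i \in A -> th i \notin A) (proper_admissible A).
Proof.
rewrite /proper_admissible /admissible.
apply: (iffP idP).
- case/andP => Hp /or3P [/eqP EA | /eqP EA | Hd] i iA.
  + by move: Hp; rewrite EA properxx.
  + by rewrite EA in iA; rewrite inE in iA.
  + apply/negP => tiA.
    by rewrite (disjointFl Hd (imset_f th iA)) in tiA.
- move=> H; apply/andP; split.
  + rewrite properT; apply/negP => /eqP EA.
    pose i0 : 'I_n := Ordinal n_gt0.
    by move: (H i0); rewrite EA !inE => /(_ isT).
  + apply/or3P; constructor 3; rewrite -setI_eq0; apply/eqP/setP => x; rewrite !inE.
    apply/negP => /andP [xA /imsetP [y yA Exy]].
    by move: (H y yA); rewrite -Exy xA.
Qed.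

Lemma pa_sub (A B : {set 'I_n}) : A \subset B -> proper_admissible B -> proper_admissible A.
Proof.
move=> sAB /paP HB; apply/paP => i iA.
apply/negP => tiA; move: (HB i (subsetP sAB i iA)).
by rewrite (subsetP sAB _ tiA).
Qed.

Lemma pa_card (A : {set 'I_n}) : proper_admissible A -> #|A| <= m.
Proof.
move=> /paP HA.
have := cardsUI A (th @: A).
rewrite (card_imset _ th_inj).
have -> : A :&: th @: A = set0.
  apply/setP=> x; rewrite !inE; apply/negP => /andP [xA /imsetP [y yA Exy]].
  by move: (HA y yA); rewrite -Exy xA.
rewrite cards0 addn0 => E.
have := max_card (A :|: th @: A). rewrite card_ord E. move: (#|A|) => a. have := Hn. rewrite -addnn. move: n A HA E => n0 _ _ _. lia.
Qed.


Definition pzero : pm := [ffun => None].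
Definition idm : pm := [ffun x => Some x].
Definition eD (D : {set 'I_n}) : pm := [ffun x => if x \in D then Some x else None].
Definition wmap (g : {perm 'I_n}) : pm := [ffun x => Some (g x)].
Definition pinv (s : pm) : pm := [ffun y => [pick x | s x == Some y]].

Lemma pm_ext (s t : pm) : (forall x, s x = t x) -> s = t.
Proof. move: s t; rewrite /pmap_ => s t H; apply/ffunP; exact: H. Qed.

Lemma domE (s : pm) x : (x \in Defs.dom s) = (s x != None).
Proof. by rewrite inE. Qed.

Lemma imgP (s : pm) y : reflect (exists x, s x = Some y) (y \in img s).
Proof.
rewrite inE; apply: (iffP existsP) => [[x /eqP]|[x Hx]]; exists x => //.
by rewrite Hx.
Qed.

Lemma pcompE (s t : pm) x : Defs.pcomp s t x = obind s (t x).
Proof. by rewrite /Defs.pcomp; try rewrite ffunE. Qed.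

Lemma pcompA (a b c : pm) : Defs.pcomp a (Defs.pcomp b c) = Defs.pcomp (Defs.pcomp a b) c.
Proof. by apply: pm_ext => x; rewrite !pcompE; case: (c x) => //= y; rewrite pcompE. Qed.

Lemma pinvE (s : pm) y x : pinj s -> (pinv s y = Some x) <-> (s x = Some y).
Proof.
move=> Hs; rewrite ffunE; case: pickP => [z /eqP Hz|H].
- split=> [[<-] //|Hx]; congr Some; exact: Hs Hz Hx.
- split=> // Hx; by move: (H x); rewrite Hx eqxx.
Qed.

Lemma pinvN (s : pm) y : (pinv s y == None) = (y \notin img s).
Proof.
rewrite ffunE; case: pickP => [z /eqP Hz|H] /=.
- by apply/esym/negbF; apply/imgP; exists z.
- by apply/esym/negP => /imgP [x Hx]; move: (H x); rewrite Hx eqxx.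
Qed.

Lemma pinj_comp (s t : pm) : pinj s -> pinj t -> pinj (Defs.pcomp s t).
Proof.
move=> Hs Ht i j y; rewrite !pcompE.
case Ei: (t i) => [a|] //=; case Ej: (t j) => [b|] //= Ha Hb.
have Eab := Hs _ _ _ Ha Hb; subst b; exact: Ht Ei Ej.
Qed.

Lemma pinj_inv (s : pm) : pinj s -> pinj (pinv s).
Proof.
move=> Hs i j y /(pinvE _ _ Hs) Hi /(pinvE _ _ Hs) Hj.
by rewrite Hi in Hj; case: Hj.
Qed.

Lemma dom_comp_sub (s t : pm) : Defs.dom (Defs.pcomp s t) \subset Defs.dom t.
Proof. by apply/subsetP => x; rewrite !domE pcompE; case: (t x). Qed.

Lemma img_comp_sub (s t : pm) : img (Defs.pcomp s t) \subset img s.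
Proof.
apply/subsetP => y /imgP [x]; rewrite pcompE; case: (t x) => //= z Hz.
by apply/imgP; exists z.
Qed.

Lemma dom_inv (s : pm) : pinj s -> Defs.dom (pinv s) = img s.
Proof. by move=> Hs; apply/setP => y; rewrite domE pinvN negbK. Qed.

Lemma img_inv (s : pm) : pinj s -> img (pinv s) = Defs.dom s.
Proof.
move=> Hs; apply/setP => x; rewrite domE; apply/imgP/idP => [[y /(pinvE _ _ Hs) ->] //|].
case Ex: (s x) => [y|] // _; exists y; exact/(pinvE _ _ Hs).
Qed.

Lemma dom_eD D : Defs.dom (eD D) = D.
Proof. by apply/setP => x; rewrite domE ffunE; case: (x \in D). Qed.

Lemma img_eD D : img (eD D) = D.
Proof.
apply/setP => y; apply/imgP/idP => [[x]|yD]; last by exists y; rewrite ffunE yD.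
by rewrite ffunE; case: ifP => // xD [<-].
Qed.

Lemma pinj_eD D : pinj (eD D).
Proof. by move=> i j y; rewrite !ffunE; case: (i \in D) => // -[->]; case: (j \in D) => // -[]. Qed.

Lemma pinj_wmap g : pinj (wmap g).
Proof. by move=> i j y; rewrite !ffunE => -[<-] [] /perm_inj. Qed.

Lemma WsetP (g : {perm 'I_n}) : reflect (forall i, g (th i) = th (g i)) (g \in Wset n).
Proof. by rewrite inE; apply: (iffP forallP) => H i; [exact/eqP | exact/eqP]. Qed.

Lemma Wset1 : 1%g \in Wset n.
Proof. by apply/WsetP => i; rewrite !perm1. Qed.

Lemma WsetM g h : g \in Wset n -> h \in Wset n -> (g * h)%g \in Wset n.
Proof. by move=> /WsetP Hg /WsetP Hh; apply/WsetP => i; rewrite !permM Hg Hh. Qed.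

Lemma WsetV g : g \in Wset n -> (g^-1)%g \in Wset n.
Proof.
move=> /WsetP Hg; apply/WsetP => i.
apply: (@perm_inj _ g); rewrite Hg !permKV //.
Qed.

Lemma inW_wmap (s : pm) : inW s <-> exists2 w, w \in Wset n & s = wmap w.
Proof.
split=> [[w Hw Hs]|[w Hw ->]]; exists w => //.
by apply: pm_ext => x; rewrite ffunE.
by move=> i; rewrite ffunE.
Qed.

Lemma pa0 : proper_admissible (set0 : {set 'I_n}).
Proof. by apply/paP => i; rewrite inE. Qed.

Lemma SR_wmap g : g \in Wset n -> SR (wmap g).
Proof. move=> Hg; split; first exact: pinj_wmap. by right; apply/inW_wmap; exists g. Qed.

Lemma SR_eD D : proper_admissible D -> SR (eD D).
Proof. by move=> HD; split; [exact: pinj_eD | left; rewrite dom_eD img_eD]. Qed.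

Lemma SR_zero : SR pzero.
Proof.
have -> : pzero = eD set0 by apply: pm_ext => x; rewrite !ffunE inE.
exact: SR_eD pa0.
Qed.

Lemma SR_idm : SR idm.
Proof.
have -> : idm = wmap 1 by apply: pm_ext => x; rewrite !ffunE perm1.
exact: SR_wmap Wset1.
Qed.

Lemma wmapM g h : Defs.pcomp (wmap g) (wmap h) = wmap (h * g)%g.
Proof. by apply: pm_ext => x; rewrite pcompE !ffunE /= ffunE permM. Qed.

Lemma SR_cases (s : pm) : SR s ->
  (exists2 w, w \in Wset n & s = wmap w) \/
  [/\ pinj s, proper_admissible (Defs.dom s) & proper_admissible (img s)].
Proof.
case=> Hi [[Hd Hm']|/inW_wmap HW]; [by right | by left].
Qed.

Lemma SR_nonW (s : pm) : pinj s -> proper_admissible (Defs.dom s) -> proper_admissible (img s) -> SR s.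
Proof. by move=> *; split => //; left. Qed.

Lemma SR_comp (s t : pm) : SR s -> SR t -> SR (Defs.pcomp s t).
Proof.
move=> Hs Ht.
case: (SR_cases Hs) => [[ws Hws Es]|[Is Ds Ims]];
case: (SR_cases Ht) => [[wt Hwt Et]|[It Dt Imt]].
- by rewrite Es Et wmapM; apply: SR_wmap; apply: WsetM.
- have Is : pinj s by rewrite Es; exact: pinj_wmap.
  apply: SR_nonW; first exact: pinj_comp.
  + exact: pa_sub (dom_comp_sub _ _) Dt.
  + move/paP: Imt => Imt; apply/paP => y /imgP [x]; rewrite pcompE Es.
    case Ex: (t x) => [z|] //=; rewrite ffunE => -[<-].
    apply/negP => /imgP [x']; rewrite pcompE.
    case Ex': (t x') => [z'|] //=; rewrite ffunE => -[].
    move/WsetP: Hws => <- /perm_inj Ez'.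
    have : z \in img t by apply/imgP; exists x.
    move/Imt; rewrite -Ez'; case/negP; apply/imgP; by exists x'.
- have It : pinj t by rewrite Et; exact: pinj_wmap.
  apply: SR_nonW; first exact: pinj_comp.
  + move/paP: Ds => Ds; apply/paP => x; rewrite !domE !pcompE Et !ffunE /=.
    move/WsetP: Hwt => ->. move=> H1. have := Ds (wt x). rewrite !domE H1 => /(_ isT) //.
  + exact: pa_sub (img_comp_sub _ _) Ims.
- apply: SR_nonW; first exact: pinj_comp.
  + exact: pa_sub (dom_comp_sub _ _) Dt.
  + exact: pa_sub (img_comp_sub _ _) Ims.
Qed.

Lemma pinv_wmap w : pinv (wmap w) = wmap (w^-1)%g.
Proof.
apply: pm_ext => y; rewrite [RHS]ffunE.
apply/(pinvE _ _ (@pinj_wmap w)); by rewrite ffunE permKV.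
Qed.

Lemma SR_inv (s : pm) : SR s -> SR (pinv s).
Proof.
move=> Hs; case: (SR_cases Hs) => [[w Hw ->]|[Is Ds Ims]].
- by rewrite pinv_wmap; apply: SR_wmap; apply: WsetV.
- by apply: SR_nonW; [exact: pinj_inv | rewrite dom_inv | rewrite img_inv].
Qed.

Lemma SR_pinj (s : pm) : SR s -> pinj s.
Proof. by case. Qed.

Lemma pc0l (s : pm) : Defs.pcomp pzero s = pzero.
Proof. by apply: pm_ext => x; rewrite pcompE ffunE; case: (s x) => //= y; rewrite ffunE. Qed.

Lemma pc0r (s : pm) : Defs.pcomp s pzero = pzero.
Proof. by apply: pm_ext => x; rewrite pcompE !ffunE. Qed.

Lemma eD0 : eD set0 = pzero.
Proof. by apply: pm_ext => x; rewrite !ffunE inE. Qed.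

Lemma eDI (A B : {set 'I_n}) : Defs.pcomp (eD A) (eD B) = eD (A :&: B).
Proof.
apply: pm_ext => x; rewrite pcompE !ffunE inE.
by case: (x \in B); rewrite ?andbT ?andbF //= ffunE.
Qed.

Lemma pc_eD_r (s : pm) (D : {set 'I_n}) : Defs.dom s \subset D -> Defs.pcomp s (eD D) = s.
Proof.
move=> sD; apply: pm_ext => x; rewrite pcompE ffunE.
case: ifP => //= xD; case Ex: (s x) => [y|] //.
by move: (subsetP sD x); rewrite domE Ex xD => /(_ isT).
Qed.

Lemma pc_eD_l (s : pm) (D : {set 'I_n}) : img s \subset D -> Defs.pcomp (eD D) s = s.
Proof.
move=> sD; apply: pm_ext => x; rewrite pcompE.
case Ex: (s x) => [y|] //=; rewrite ffunE.
by rewrite (subsetP sD y) //; apply/imgP; exists x.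
Qed.

Lemma pc_inv_l (s : pm) : pinj s -> Defs.pcomp (pinv s) s = eD (Defs.dom s).
Proof.
move=> Hs; apply: pm_ext => x; rewrite pcompE ffunE domE.
case Ex: (s x) => [y|] //=; exact/(pinvE _ _ Hs).
Qed.

Lemma pc_inv_r (s : pm) : pinj s -> Defs.pcomp s (pinv s) = eD (img s).
Proof.
move=> Hs; apply: pm_ext => y; rewrite pcompE [in RHS]ffunE.
case: ifP => [/imgP [x Hx]|].
- by have -> /= : pinv s y = Some x by apply/(pinvE _ _ Hs).
- by move/negbT; rewrite -pinvN => /eqP ->.
Qed.

Lemma pc_idm_l (s : pm) : Defs.pcomp idm s = s.
Proof. by apply: pm_ext => x; rewrite pcompE; case: (s x) => //= y; rewrite ffunE. Qed.

Lemma pc_idm_r (s : pm) : Defs.pcomp s idm = s.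
Proof. by apply: pm_ext => x; rewrite pcompE ffunE. Qed.

Lemma wmapV w : Defs.pcomp (wmap (w^-1)%g) (wmap w) = idm.
Proof. by rewrite wmapM mulgV; apply: pm_ext => x; rewrite !ffunE perm1. Qed.

Lemma wmapVr w : Defs.pcomp (wmap w) (wmap (w^-1)%g) = idm.
Proof. by rewrite wmapM mulVg; apply: pm_ext => x; rewrite !ffunE perm1. Qed.

Lemma dom_wmap w : Defs.dom (wmap w) = setT.
Proof. by apply/setP => x; rewrite domE ffunE inE. Qed.

Lemma img_wmap w : img (wmap w) = setT.
Proof. apply/setP => y; rewrite [in RHS]inE; apply/imgP; exists (w^-1 y)%g; by rewrite ffunE permKV. Qed.

Lemma pa_notT (A : {set 'I_n}) : proper_admissible A -> exists c, c \notin A.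
Proof.
move/paP => HA; pose i0 : 'I_n := Ordinal n_gt0.
case: (boolP (i0 \in A)) => H; last by exists i0.
by exists (th i0); apply: HA.
Qed.

Lemma SR_nonW_dom (s : pm) c : SR s -> c \notin Defs.dom s ->
  [/\ pinj s, proper_admissible (Defs.dom s) & proper_admissible (img s)].
Proof.
move=> Hs cs; case: (SR_cases Hs) => // -[w _ Ew].
by rewrite Ew dom_wmap inE in cs.
Qed.

Lemma rk_W w : rk (wmap w) = n.
Proof. by rewrite /rk dom_wmap cardsT card_ord. Qed.

Lemma rk_nonW (s : pm) : proper_admissible (Defs.dom s) -> rk s <= m.
Proof. exact: pa_card. Qed.

Lemma m_lt_n : m < n.
Proof. rewrite Hn; lia. Qed.

Lemma full_pa (D : {set 'I_n}) : (forall i, (th i \in D) = ~~ (i \in D)) ->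
  proper_admissible D /\ #|D| = m.
Proof.
move=> HD.
have pD : proper_admissible D by apply/paP => i iD; rewrite HD iD.
split => //; apply/eqP; rewrite eqn_leq pa_card //=.
have E : D :|: th @: D = setT.
  apply/setP => i; rewrite !inE; case: (boolP (i \in D)) => //= iD.
  apply/imsetP; exists (th i); last by rewrite thK.
  by rewrite HD.
have H1 := cardsUI D (th @: D).
rewrite E cardsT card_ord (card_imset _ th_inj) in H1.
move: H1; move: (#|D :&: _|) (#|D|) => a b. have := Hn. lia.
Qed.

Variable rho : pm -> pm -> Prop.
Hypothesis Hc : congruence rho.

Lemma cref s : SR s -> rho s s.
Proof. by case: Hc => H _ _ _; apply: H. Qed.
Lemma csym s t : SR s -> SR t -> rho s t -> rho t s.
Proof. by case: Hc => _ H _ _; apply: H. Qed.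
Lemma ctr s t u : SR s -> SR t -> SR u -> rho s t -> rho t u -> rho s u.
Proof. by case: Hc => _ _ H _; apply: H. Qed.
Lemma cL a s t : SR a -> SR s -> SR t -> rho s t -> rho (Defs.pcomp a s) (Defs.pcomp a t).
Proof. by case: Hc => _ _ _ H Ha Hs Ht Hst; case: (H s t a Hs Ht Ha Hst). Qed.
Lemma cR a s t : SR a -> SR s -> SR t -> rho s t -> rho (Defs.pcomp s a) (Defs.pcomp t a).
Proof. by case: Hc => _ _ _ H Ha Hs Ht Hst; case: (H s t a Hs Ht Ha Hst). Qed.

Definition U := forall a, SR a -> rho a pzero.

Lemma ZW w : w \in Wset n -> rho (wmap w) pzero -> U.
Proof.
move=> Hw H a Sa.
have Sb : SR (Defs.pcomp a (wmap (w^-1)%g)) by apply: SR_comp => //; apply/SR_wmap/WsetV.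
have := cL Sb (SR_wmap Hw) SR_zero H.
by rewrite -pcompA wmapV pc_idm_r pc0r.
Qed.

Lemma shrink (D : {set 'I_n}) : proper_admissible D -> forall C : {set 'I_n},
  C \subset D -> (exists2 p, p \in D & p \notin C) -> rho (eD D) (eD C) -> rho (eD D) pzero.
Proof.
move=> HD C; have [k Hk] := ubnP #|C|; elim: k C Hk => // k IH C HCk sCD [p pD pC] HDC.
case: (set_0Vmem C) => [C0|[c cC]]; first by rewrite C0 eD0 in HDC.
have cD := subsetP sCD c cC.
have tD : forall x, (tperm c p x \in D) = (x \in D).
  move=> x; case: tpermP => [->|->|] //; by rewrite cD pD.
pose pi : pm := [ffun x => if x \in D then Some (tperm c p x) else None].
have Spi : SR pi.
  apply: SR_nonW.
  - move=> i j y; rewrite !ffunE; case: ifP => // _; case: ifP => // _ [<-] [] /perm_inj //.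
  - apply: pa_sub HD; apply/subsetP => x; rewrite domE ffunE; by case: ifP.
  - apply: pa_sub HD; apply/subsetP => y /imgP [x]; rewrite ffunE; case: ifP => // xD [<-].
    by rewrite tD.
have SD := SR_eD HD.
have paC : proper_admissible C by apply: pa_sub HD.
have SC := SR_eD paC.
pose C' := [set x in D | tperm c p x \in C].
have pC' : proper_admissible C' by apply: pa_sub HD; apply/subsetP => x; rewrite inE => /andP[].
have E1 : Defs.pcomp pi (Defs.pcomp (eD D) pi) = eD D.
  apply: pm_ext => x; rewrite !pcompE !ffunE; case: ifP => //= xD.
  by rewrite ffunE tD xD /= ffunE tD xD tpermK.
have E2 : Defs.pcomp pi (Defs.pcomp (eD C) pi) = eD C'.
  apply: pm_ext => x; rewrite !pcompE [eD C' x]ffunE [pi x]ffunE inE; case: ifP => //= xD.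
  rewrite ffunE; case: ifP => //= tC.
  by rewrite ffunE tD xD tpermK.
have H1 : rho (eD D) (eD C').
  have := cL Spi (SR_comp SD Spi) (SR_comp SC Spi) (cR Spi SD SC HDC).
  by rewrite E1 E2.
have H2 : rho (eD C) (eD (C :&: C')).
  have := cL SC SD (SR_eD pC') H1.
  by rewrite !eDI (setIidPl sCD).
have pCC : proper_admissible (C :&: C') by apply: pa_sub paC; apply: subsetIl.
apply: (IH (C :&: C')).
- have cC' : c \notin C' by rewrite inE tpermL (negbTE pC) andbF.
  have sub : C :&: C' \subset C :\ c.
    apply/subsetP => x /setIP [xC xC']; rewrite !inE xC andbT.
    by apply/eqP => Exc; rewrite Exc (negbTE cC') in xC'.
  have := subset_leq_card sub. rewrite (cardsD1 c C) cC in HCk.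
  move: HCk; move: (#|C :\ c|) (#|C :&: C'|) => a b. lia.
- exact: subset_trans (subsetIl _ _) sCD.
- by exists p => //; rewrite inE (negbTE pC).
- exact: ctr SD SC (SR_eD pCC) HDC H2.
Qed.

Lemma S2dom (s t : pm) c : SR s -> SR t -> proper_admissible (Defs.dom s) -> rho s t ->
  c \in Defs.dom s -> c \notin Defs.dom t -> rho s pzero.
Proof.
move=> Ss St pD Hst cs ct.
have Is := SR_pinj Ss.
set D := Defs.dom s.
have Su := SR_inv Ss.
have SD := SR_eD pD.
have H1 : rho (eD D) (Defs.pcomp (pinv s) t).
  by have := cL Su Ss St Hst; rewrite pc_inv_l.
have Sy := SR_comp Su St.
have H2 : rho (eD D) (Defs.pcomp (Defs.pcomp (pinv s) t) (eD D)).
  by have := cR SD SD Sy H1; rewrite eDI setIid.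
set y' := Defs.pcomp (Defs.pcomp (pinv s) t) (eD D) in H2.
have Sy' : SR y' by apply: SR_comp.
set C := Defs.dom y'.
have sCD : C \subset D by have := dom_comp_sub (Defs.pcomp (pinv s) t) (eD D); rewrite dom_eD.
have cC : c \notin C.
  rewrite domE !pcompE ffunE cs /= pcompE.
  by move: ct; rewrite domE negbK => /eqP ->.
have pC : proper_admissible C by apply: pa_sub pD.
have H3 : rho (eD C) y'.
  have := cR (SR_eD pC) SD Sy' H2.
  by rewrite eDI (setIidPr sCD) pc_eD_r.
have H4 : rho (eD D) (eD C) by apply: ctr SD Sy' (SR_eD pC) H2 (csym (SR_eD pC) Sy' H3).
have H5 := shrink pD sCD (ex_intro2 _ _ c cs cC) H4.
by have := cL Ss SD SR_zero H5; rewrite pc_eD_r // pc0r.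
Qed.

Lemma S2img (s t : pm) b : SR s -> SR t -> proper_admissible (img s) -> rho s t ->
  b \in img s -> b \notin img t -> rho s pzero.
Proof.
move=> Ss St pI Hst bs bt.
have Is := SR_pinj Ss.
set I := img s.
have Su := SR_inv Ss.
have SI := SR_eD pI.
have H1 : rho (eD I) (Defs.pcomp t (pinv s)).
  by have := cR Su Ss St Hst; rewrite pc_inv_r.
have Sy := SR_comp St Su.
have H2 : rho (eD I) (Defs.pcomp (eD I) (Defs.pcomp t (pinv s))).
  by have := cL SI SI Sy H1; rewrite eDI setIid.
set y' := Defs.pcomp (eD I) (Defs.pcomp t (pinv s)) in H2.
have Sy' : SR y' by apply: SR_comp.
set C := img y'.
have sCI : C \subset I by have := img_comp_sub (eD I) (Defs.pcomp t (pinv s)); rewrite img_eD.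
have bC : b \notin C.
  apply/negP => /imgP [x]; rewrite !pcompE.
  case Ex: (pinv s x) => [z|] //=; case Ez: (t z) => [w|] //=.
  rewrite ffunE; case: ifP => // _ [Ew]; subst w.
  by move/negP: bt; apply; apply/imgP; exists z.
have pC : proper_admissible C by apply: pa_sub pI.
have H3 : rho (eD C) y'.
  have := cL (SR_eD pC) SI Sy' H2.
  by rewrite eDI (setIidPl sCI) pc_eD_l.
have H4 : rho (eD I) (eD C) by apply: ctr SI Sy' (SR_eD pC) H2 (csym (SR_eD pC) Sy' H3).
have H5 := shrink pI sCI (ex_intro2 _ _ b bs bC) H4.
by have := cR Ss SI SR_zero H5; rewrite pc_eD_l // pc0l.
Qed.

Lemma inj_exists (A B : {set 'I_n}) : #|A| <= #|B| ->
  exists f : pm, [/\ pinj f, Defs.dom f = A & img f \subset B].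
Proof.
move=> AB.
exists [ffun x => if x \in A then Some (nth x (enum B) (index x (enum A))) else None].
have Hidx : forall x, x \in A -> index x (enum A) < size (enum B).
  move=> x xA; rewrite -cardE; apply: leq_trans AB.
  by rewrite cardE index_mem mem_enum.
split.
- move=> i j y; rewrite !ffunE; case: ifP => // iA; case: ifP => // jA [<-] [] /eqP.
  rewrite (set_nth_default i) ?Hidx // nth_uniq ?Hidx ?enum_uniq // => /eqP Eij.
  have iA' : i \in enum A by rewrite mem_enum.
  by rewrite -(nth_index i iA') -Eij nth_index // mem_enum.
- by apply/setP => x; rewrite domE ffunE; case: ifP.
- apply/subsetP => y /imgP [x]; rewrite ffunE; case: ifP => // xA [<-].
  by rewrite -mem_enum; apply: mem_nth; apply: Hidx.
Qed.

Lemma S1 (x y : pm) : SR x -> SR y -> proper_admissible (Defs.dom x) ->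
  proper_admissible (Defs.dom y) -> proper_admissible (img y) ->
  rk y <= rk x -> rho x pzero -> rho y pzero.
Proof.
move=> Sx Sy px pdy piy Hr Hx.
have [b [Ib Db Imb]] := inj_exists Hr.
have Sb : SR b by apply: SR_nonW => //; [rewrite Db | apply: pa_sub px].
have Ix := SR_pinj Sx.
have Iy := SR_pinj Sy.
set xb := Defs.pcomp x b.
have Sxb : SR xb by apply: SR_comp.
have Dxb : Defs.dom xb = Defs.dom y.
  apply/setP => z; rewrite domE pcompE -Db domE.
  case Ez: (b z) => [w|] //=.
  have : w \in Defs.dom x by apply: (subsetP Imb); apply/imgP; exists z.
  by rewrite domE.
set a := Defs.pcomp y (pinv xb).
have Sa : SR a by apply: SR_comp => //; apply: SR_inv.
have E : Defs.pcomp a xb = y.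
  by rewrite /a -pcompA pc_inv_l ?Dxb ?pc_eD_r //; apply: SR_pinj.
have H1 : rho xb pzero by have := cR Sb Sx SR_zero Hx; rewrite pc0l.
by have := cL Sa Sxb SR_zero H1; rewrite pc0r E.
Qed.

Lemma th_lt (i : 'I_n) : (th i < m) = ~~ (i < m).
Proof.
rewrite /theta /=; have := ltn_ord i; move: (nat_of_ord i) => k.
have := Hn; move: n => n0 Hn0 Hk.
case: (ltnP k m) => H /=; [apply/negbTE | apply/idP]; lia.
Qed.

Definition half (c : 'I_n) : {set 'I_n} := [set i : 'I_n | (i < m) == (c < m)].

Lemma half_full c i : (th i \in half c) = ~~ (i \in half c).
Proof. by rewrite !inE th_lt; case: (i < m); case: (c < m). Qed.

Lemma half_c c : c \in half c.
Proof. by rewrite inE. Qed.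

Lemma idm_wmap : idm = wmap 1%g.
Proof. by apply: pm_ext => x; rewrite !ffunE perm1. Qed.

Lemma S2W w t : w \in Wset n -> SR t -> proper_admissible (Defs.dom t) ->
  rho (wmap w) t -> U.
Proof.
move=> Hw St pt H.
have Swi : SR (wmap (w^-1)%g) by apply/SR_wmap/WsetV.
set x := Defs.pcomp (wmap (w^-1)%g) t.
have Sx : SR x by apply: SR_comp.
have H1 : rho idm x by have := cL Swi (SR_wmap Hw) St H; rewrite wmapV.
have [c ct] := pa_notT pt.
have cx : c \notin Defs.dom x by apply/negP => /(subsetP (dom_comp_sub _ _)); apply/negP.
have [pH cH] := full_pa (half_full c).
have SH := SR_eD pH.
set y := Defs.pcomp x (eD (half c)).
have Sy : SR y by apply: SR_comp.
have H2 : rho (eD (half c)) y by have := cR SH SR_idm Sx H1; rewrite pc_idm_l.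
have cy : c \notin Defs.dom y.
  move: cx; rewrite /y !domE !pcompE ffunE half_c /=. by rewrite pcompE.
have pdH : proper_admissible (Defs.dom (eD (half c))) by rewrite dom_eD.
have cdH : c \in Defs.dom (eD (half c)) by rewrite dom_eD half_c.
have H3 := S2dom SH Sy pdH H2 cdH cy.
have [Ix px pix] := SR_nonW_dom Sx cx.
have H4 : rho x pzero.
  apply: (S1 SH Sx) => //.
  by rewrite /rk dom_eD cH; apply: rk_nonW.
have H5 : rho idm pzero by apply: ctr SR_idm Sx SR_zero H1 H4.
by apply: (ZW Wset1); rewrite -idm_wmap.
Qed.

Lemma S2 s t : SR s -> SR t -> rho s t -> ~ Hrel s t -> U \/ rho s pzero.
Proof.
move=> Ss St H nH.
case: (SR_cases Ss) => [[ws Hws Es]|[Is Ds Ims]];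
case: (SR_cases St) => [[wt Hwt Et]|[It Dt Imt]].
- by exfalso; apply: nH; rewrite Es Et /Hrel !dom_wmap !img_wmap.
- by left; rewrite Es in H; exact: (S2W Hws St Dt H).
- by left; apply: (S2W Hwt Ss Ds); rewrite -Et; apply: csym Ss St H.
- right.
  have sym : rho t pzero -> rho s pzero by move=> Ht; apply: ctr Ss St SR_zero H Ht.
  have H' := csym Ss St H.
  case: (boolP (Defs.dom s \subset Defs.dom t)) => [sd|/subsetPn [c cs ct]];
    last by apply: S2dom Ss St Ds H cs ct.
  case: (boolP (Defs.dom t \subset Defs.dom s)) => [sd'|/subsetPn [c cs ct]];
    last by apply: sym; apply: S2dom St Ss Dt H' cs ct.
  case: (boolP (img s \subset img t)) => [si|/subsetPn [c cs ct]];
    last by apply: S2img Ss St Ims H cs ct.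
  case: (boolP (img t \subset img s)) => [si'|/subsetPn [c cs ct]];
    last by apply: sym; apply: S2img St Ss Imt H' cs ct.
  exfalso; apply: nH; split; apply/eqP; rewrite eqEsubset; apply/andP; split => //.
Qed.

Lemma S3n s t : SR s -> SR t -> proper_admissible (Defs.dom s) -> proper_admissible (img s) ->
  Hrel s t -> rho s t -> s <> t ->
  exists z, [/\ SR z, proper_admissible (Defs.dom z), proper_admissible (img z),
                (rk z).+1 = rk s & rho z pzero].
Proof.
move=> Ss St pd pi [Ed Ei] H nst.
have Is := SR_pinj Ss.
have [c Hc'] : exists c, s c <> t c.
  apply: NNPP => Hn'; apply: nst; apply: pm_ext => x; apply: NNPP => Hx; apply: Hn'; by exists x.
case Esc: (s c) => [b|]; last first.
  have : c \notin Defs.dom t by rewrite -Ed domE Esc.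
  by rewrite domE negbK => /eqP Etc; rewrite Esc Etc in Hc'.
case Etc: (t c) => [b'|]; last first.
  have : c \in Defs.dom t by rewrite -Ed domE Esc.
  by rewrite domE Etc.
have bb : b' <> b by move=> E; apply: Hc'; rewrite Esc Etc E.
have : b' \in img s by rewrite Ei; apply/imgP; exists c.
case/imgP => c' Esc'.
have cc : c' != c by apply/eqP => E; apply: bb; rewrite E Esc in Esc'; case: Esc'.
set D := Defs.dom s :\ c'.
have pD : proper_admissible D by apply: pa_sub pd; apply: subsetDl.
have SD := SR_eD pD.
set z := Defs.pcomp s (eD D).
set z' := Defs.pcomp t (eD D).
have Sz : SR z by apply: SR_comp.
have Sz' : SR z' by apply: SR_comp.
have H1 : rho z z' by apply: cR.
have Dz : Defs.dom z = D.
  apply/setP => x; rewrite domE pcompE ffunE; case: ifP => //= /setD1P [_].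
  by rewrite domE => ->.
have pz : proper_admissible (Defs.dom z) by rewrite Dz.
have piz : proper_admissible (img z) by apply: pa_sub pi; apply: img_comp_sub.
have cD : c \in D by rewrite !inE eq_sym cc Esc.
have b1 : b' \in img z'.
  by apply/imgP; exists c; rewrite pcompE ffunE cD /= Etc.
have b2 : b' \notin img z.
  apply/negP => /imgP [x]; rewrite pcompE ffunE; case: ifP => //= xD Ex.
  have Exc := Is _ _ _ Ex Esc'.
  by move: xD; rewrite Exc !inE eqxx.
have piz' : proper_admissible (img z') by apply: pa_sub pi; rewrite Ei; apply: img_comp_sub.
have H2 := S2img Sz' Sz piz' (csym Sz Sz' H1) b1 b2.
exists z; split => //; last exact: ctr Sz Sz' SR_zero H1 H2.
rewrite /rk Dz (cardsD1 c' (Defs.dom s)).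
by have -> : c' \in Defs.dom s by rewrite domE Esc'.
Qed.

Lemma th_eq i j : (th i == j) = (i == th j).
Proof. by rewrite -(inj_eq th_inj) thK. Qed.

Definition Dcd (c d : 'I_n) : {set 'I_n} :=
  [set i | if (i == c) || (i == th c) then i == c
           else if (i == th d) || (i == d) then i == d else i < m].

Lemma Dcd_full c d i : (th i \in Dcd c d) = ~~ (i \in Dcd c d).
Proof.
rewrite !inE.
have -> : ((th i == c) || (th i == th c)) = ((i == c) || (i == th c)).
  by rewrite (inj_eq th_inj) th_eq orbC.
have -> : ((th i == th d) || (th i == d)) = ((i == th d) || (i == d)).
  by rewrite (inj_eq th_inj) th_eq orbC.
case: ifP => [/orP [/eqP Ei | /eqP Ei] | _].
- by rewrite Ei eqxx; exact: negbTE (th_neq _).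
- by rewrite Ei thK eqxx th_neq.
case: ifP => [/orP [/eqP Ei | /eqP Ei] | _].
- by rewrite Ei thK eqxx th_neq.
- by rewrite Ei eqxx; exact: negbTE (th_neq _).
- exact: th_lt.
Qed.

Lemma S3W w1 w2 : w1 \in Wset n -> w2 \in Wset n ->
  rho (wmap w1) (wmap w2) -> w1 <> w2 ->
  exists z, [/\ SR z, proper_admissible (Defs.dom z), proper_admissible (img z),
                rk z = m & rho z pzero].
Proof.
move=> H1 H2 H nw.
have Swi : SR (wmap (w1^-1)%g) by apply/SR_wmap/WsetV.
set g := (w2 * w1^-1)%g.
have Hg : g \in Wset n by apply: WsetM => //; apply: WsetV.
have Hi : rho idm (wmap g).
  by have := cL Swi (SR_wmap H1) (SR_wmap H2) H; rewrite wmapV wmapM.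
have [c Hc'] : exists c, g c != c.
  case: (pickP (fun c => g c != c)) => [c Hc'|Hn']; first by exists c.
  exfalso; apply: nw; apply/esym/eqP; rewrite eq_mulgV1; apply/eqP/permP => x.
  have := Hn' x; rewrite /= perm1 => /negbFE /eqP. by [].
set D := Dcd c (th (g c)).
have [pD cD] := full_pa (Dcd_full c (th (g c))).
have SD := SR_eD pD.
have cin : c \in D by rewrite inE eqxx.
have gout : g c \notin D.
  rewrite inE thK eqxx (negbTE Hc') /=.
  case: ifP => // _; rewrite eq_sym; exact: th_neq.
set y := Defs.pcomp (eD D) (Defs.pcomp (wmap g) (eD D)).
have Sy : SR y by apply: SR_comp => //; apply: SR_comp => //; apply: SR_wmap.
have H3 : rho (eD D) y.
  have H3' : rho (eD D) (Defs.pcomp (wmap g) (eD D)).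
    by have := cR SD SR_idm (SR_wmap Hg) Hi; rewrite pc_idm_l.
  by have := cL SD SD (SR_comp (SR_wmap Hg) SD) H3'; rewrite eDI setIid.
have cy : c \notin Defs.dom y.
  by rewrite domE !pcompE [eD D c]ffunE cin /= ffunE /= ffunE (negbTE gout).
have pdD : proper_admissible (Defs.dom (eD D)) by rewrite dom_eD.
have cdD : c \in Defs.dom (eD D) by rewrite dom_eD.
exists (eD D); split => //; rewrite ?dom_eD ?img_eD //.
- by rewrite /rk dom_eD.
- exact: S2dom SD Sy pdD H3 cdD cy.
Qed.

Definition pb (P : Prop) : bool := if excluded_middle_informative P then true else false.
Lemma pbP (P : Prop) : reflect P (pb P).
Proof. by rewrite /pb; case: excluded_middle_informative => H; constructor. Qed.

Lemma gset_of (gT : finGroupType) (A : {set gT}) : (1 \in A)%g ->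
  (forall x y, x \in A -> y \in A -> (x * y)%g \in A) -> group_set A.
Proof. by move=> H1 HM; apply/group_setP; split => // x y; apply: HM. Qed.

Lemma norm_of (gT : finGroupType) (G A : {set gT}) :
  (forall x g, x \in A -> g \in G -> (x ^ g)%g \in A) -> (G \subset 'N(A))%g.
Proof.
move=> H; apply/normsP => g Hg; apply/eqP; rewrite eqEcard cardJg leqnn andbT.
apply/subsetP => x; rewrite mem_conjg => Hx.
by have := H _ _ Hx Hg; rewrite conjgKV.
Qed.

Section Lift.
Variable k : nat.
Hypothesis Hkm : k <= m.
Let Hkn : k <= n. Proof. by apply: leq_trans Hkm (ltnW m_lt_n). Qed.
Let io (i : 'I_k) : 'I_n := widen_ord Hkn i.
Lemma io_inj : injective io.
Proof. by move=> i j /(congr1 val) /= /val_inj. Qed.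

Definition Ak : {set 'I_n} := [set x : 'I_n | x < k].

Lemma pa_Ak : proper_admissible Ak.
Proof.
apply/paP => i; rewrite !inE /theta /=; have := ltn_ord i; move: (nat_of_ord i) => a.
have := Hn; move: n Hkn => n0 _ Hn0 Ha Hak. rewrite -leqNgt. lia.
Qed.

Definition lift (f : 'I_k -> 'I_n) : pm := [ffun x => omap f (insub (val x) : option 'I_k)].

Lemma lift_io f i : lift f (io i) = Some (f i).
Proof. by rewrite ffunE /= insubT //= => Hi; congr Some; congr f; apply: val_inj. Qed.

Lemma lift_out f x : x \notin Ak -> lift f x = None.
Proof. by rewrite inE => H; rewrite ffunE insubN. Qed.

Lemma Ak_io x : x \in Ak -> exists i, x = io i.
Proof. by rewrite inE => Hx; exists (Ordinal Hx); apply: val_inj. Qed.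

Lemma io_Ak i : io i \in Ak.
Proof. by rewrite inE /=. Qed.

Lemma lift_cases f x : (exists2 i, x = io i & lift f x = Some (f i)) \/ (x \notin Ak /\ lift f x = None).
Proof.
case: (boolP (x \in Ak)) => H.
- by left; have [i ->] := Ak_io H; exists i => //; rewrite lift_io.
- by right; rewrite lift_out.
Qed.

Lemma dom_lift f : Defs.dom (lift f) = Ak.
Proof.
apply/setP => x; rewrite domE; case: (lift_cases f x) => [[i -> ->]|[H ->]] //.
by rewrite io_Ak.
by rewrite (negbTE H).
Qed.

Lemma pinj_lift f : injective f -> pinj (lift f).
Proof.
move=> Hf x y z; case: (lift_cases f x) => [[i -> ->]|[_ ->]] //;
case: (lift_cases f y) => [[j -> ->]|[_ ->]] // [<-] [] /Hf ->. by [].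
Qed.

Lemma SR_lift f (B : {set 'I_n}) : injective f -> (forall i, f i \in B) ->
  proper_admissible B -> SR (lift f).
Proof.
move=> Hf HB pB; apply: SR_nonW; first exact: pinj_lift.
- by rewrite dom_lift; exact: pa_Ak.
- apply: pa_sub pB; apply/subsetP => y /imgP [x].
  by case: (lift_cases f x) => [[i _ ->] [<-]|[_ ->]].
Qed.

Definition P (mu : {perm 'I_k}) : pm := lift (fun i => io (mu i)).

Lemma SR_P mu : SR (P mu).
Proof.
apply: (SR_lift (B := Ak)); last exact: pa_Ak.
- by move=> i j /io_inj /perm_inj.
- by move=> i; apply: io_Ak.
Qed.

Lemma PM mu nu : Defs.pcomp (P nu) (P mu) = P (mu * nu)%g.
Proof.
apply: pm_ext => x; rewrite pcompE.
case: (lift_cases (fun i => io (mu i)) x) => [[i -> ->]|[H ->]] /=.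
- by rewrite !lift_io permM.
- by rewrite lift_out.
Qed.

Lemma liftP f mu : Defs.pcomp (lift f) (P mu) = lift (fun i => f (mu i)).
Proof.
apply: pm_ext => x; rewrite pcompE.
case: (lift_cases (fun i => io (mu i)) x) => [[i -> ->]|[H ->]] /=.
- by rewrite !lift_io.
- by rewrite lift_out.
Qed.

Definition NS : {set {perm 'I_k}} := [set mu | pb (rho (P mu) (P 1))].

Lemma NS_group : group_set NS.
Proof.
apply: gset_of; first by rewrite inE; apply/pbP; apply: cref; apply: SR_P.
move=> x y; rewrite !inE => /pbP Hx /pbP Hy; apply/pbP.
have H1 := cL (SR_P y) (SR_P x) (SR_P 1) Hx.
rewrite !PM mul1g in H1.
exact: ctr (SR_P _) (SR_P _) (SR_P _) H1 Hy.
Qed.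


Lemma NS_norm : ([set: {perm 'I_k}] \subset 'N(NS))%g.
Proof.
apply: norm_of => x g; rewrite !inE => /pbP Hx _; apply/pbP.
have H1 := cR (SR_P (g^-1)%g) (SR_P x) (SR_P 1) Hx.
rewrite !PM in H1.
have H2 := cL (SR_P g) (SR_P _) (SR_P _) H1.
by rewrite !PM mulg1 mulVg -mulgA -conjgE in H2.
Qed.

Lemma nonW_rk (s : pm) : SR s -> rk s < n ->
  [/\ pinj s, proper_admissible (Defs.dom s) & proper_admissible (img s)].
Proof.
move=> Ss; case: (SR_cases Ss) => // -[w _ ->]; by rewrite rk_W ltnn.
Qed.

Lemma relS_from (s t : pm) : SR s -> SR t -> rk s = k -> Hrel s t -> relS NS s t -> rho s t.
Proof.
move=> Ss St Hrk [Ed Ei] [mu Hmu [a [Ia Ha Hta]]].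
move: Hmu; rewrite inE => /pbP Hmu.
have Hkn' : rk s < n by rewrite Hrk; apply: leq_ltn_trans Hkm m_lt_n.
have [Is pd pi] := nonW_rk Ss Hkn'.
have aD : forall i, a i \in Defs.dom s by move=> i; apply/Ha; exists i.
have Sa : SR (lift a) by apply: SR_lift aD pd.
have Ia' := SR_pinj Sa.
have Sb := SR_inv Sa.
have Ssa : SR (Defs.pcomp s (lift a)) by apply: SR_comp.
pose F nu := Defs.pcomp (Defs.pcomp s (lift a)) (Defs.pcomp (P nu) (pinv (lift a))).
have key : forall nu i, F nu (a i) = s (a (nu i)).
  move=> nu i; rewrite /F pcompE pcompE.
  have -> : pinv (lift a) (a i) = Some (io i) by apply/(pinvE _ _ Ia'); rewrite lift_io.
  by rewrite /= /P lift_io /= pcompE lift_io.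
have key0 : forall nu x, x \notin Defs.dom s -> F nu x = None.
  move=> nu x Hx; rewrite /F pcompE pcompE.
  have -> : pinv (lift a) x = None.
    apply/eqP; rewrite pinvN; apply/negP => /imgP [y].
    case: (lift_cases a y) => [[i _ ->] [Ei']|[_ ->]] //.
    by move: (aD i); rewrite Ei' (negbTE Hx).
  by [].
have Et : t = F mu.
  apply: pm_ext => x; case: (boolP (x \in Defs.dom s)) => Hx.
  - by have [i <-] := (Ha x).1 Hx; rewrite key Hta.
  - rewrite key0 //; apply/eqP; by move: Hx; rewrite Ed domE negbK.
have Es : s = F 1%g.
  apply: pm_ext => x; case: (boolP (x \in Defs.dom s)) => Hx.
  - by have [i <-] := (Ha x).1 Hx; rewrite key perm1.
  - rewrite key0 //; apply/eqP; by move: Hx; rewrite domE negbK.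
have H0 := cR Sb (SR_P mu) (SR_P 1) Hmu.
have HF : rho (F mu) (F 1%g) := cL Ssa (SR_comp (SR_P mu) Sb) (SR_comp (SR_P 1) Sb) H0.
have SF1 : SR (F 1%g) by rewrite -Es.
have SFm : SR (F mu) by rewrite -Et.
rewrite {1}Es Et; exact: csym SFm SF1 HF.
Qed.


Lemma relS_to (s t : pm) : SR s -> SR t -> rk s = k -> Hrel s t -> rho s t -> relS NS s t.
Proof.
move=> Ss St Hrk [Ed Ei] H.
have Hkn' : rk s < n by rewrite Hrk; apply: leq_ltn_trans Hkm m_lt_n.
have [Is pd pi] := nonW_rk Ss Hkn'.
have It := SR_pinj St.
have Hrk' : #|Defs.dom s| = k by [].
pose a (i : 'I_k) : 'I_n := enum_val (cast_ord (esym Hrk') i).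
have Ia : injective a by move=> i j /enum_val_inj /cast_ord_inj.
have aD : forall i, a i \in Defs.dom s by move=> i; apply: enum_valP.
have Ha : forall x, x \in Defs.dom s <-> exists i, a i = x.
  move=> x; split => [xD|[i <-] //].
  exists (cast_ord Hrk' (enum_rank_in xD x)).
  by rewrite /a cast_ordK enum_rankK_in.
have Ex : forall i, exists j, s (a j) = t (a i).
  move=> i; have : a i \in Defs.dom t by rewrite -Ed.
  rewrite domE; case Et: (t (a i)) => [y|] // _.
  have : y \in img s by rewrite Ei; apply/imgP; exists (a i).
  case/imgP => x Ex.
  have : x \in Defs.dom s by rewrite domE Ex.
  by case/Ha => j Ej; exists j; rewrite Ej.
pose f i := odflt i [pick j | s (a j) == t (a i)].
have fP : forall i, s (a (f i)) = t (a i).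
  move=> i; rewrite /f; case: pickP => [j /eqP //|Hn'].
  by have [j Ej] := Ex i; move: (Hn' j); rewrite Ej eqxx.
have fI : injective f.
  move=> i j Eij.
  have E := fP i; rewrite Eij fP in E.
  have : a i \in Defs.dom t by rewrite -Ed.
  rewrite domE; case Eti: (t (a i)) => [y|] // _.
  rewrite Eti in E.
  by apply: Ia; apply: It Eti E.
pose mu := perm fI.
have Hta : forall i, t (a i) = s (a (mu i)) by move=> i; rewrite permE fP.
exists mu; last by exists a; split.
rewrite inE; apply/pbP.
have Sa : SR (lift a) by apply: SR_lift aD pd.
have Ia' := SR_pinj Sa.
have Sb : SR (Defs.pcomp (pinv (lift a)) (pinv s)) by apply: SR_comp; apply: SR_inv.
pose G q := Defs.pcomp (Defs.pcomp (Defs.pcomp (pinv (lift a)) (pinv s)) q) (lift a).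
have Gs : G s = P 1%g.
  apply: pm_ext => x; rewrite /G pcompE.
  case: (lift_cases a x) => [[i -> ->]|[Hx ->]] /=; last by rewrite lift_out.
  rewrite pcompE; have : a i \in Defs.dom s by [].
  rewrite domE; case Es: (s (a i)) => [y|] // _ /=.
  rewrite pcompE.
  have -> : pinv s y = Some (a i) by apply/(pinvE _ _ Is).
  rewrite /= /P lift_io perm1; apply/(pinvE _ _ Ia'); by rewrite lift_io.
have Gt : G t = P mu.
  apply: pm_ext => x; rewrite /G pcompE.
  case: (lift_cases a x) => [[i -> ->]|[Hx ->]] /=; last by rewrite lift_out.
  rewrite pcompE Hta; have : a (mu i) \in Defs.dom s by [].
  rewrite domE; case Es: (s (a (mu i))) => [y|] // _ /=.
  rewrite pcompE.
  have -> : pinv s y = Some (a (mu i)) by apply/(pinvE _ _ Is).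
  rewrite /= /P lift_io; apply/(pinvE _ _ Ia'); by rewrite lift_io.
have H1 := cR Sa (SR_comp Sb Ss) (SR_comp Sb St) (cL Sb Ss St H).
have HG : rho (G s) (G t) by exact: H1.
rewrite Gs Gt in HG.
exact: csym (SR_P _) (SR_P _) HG.
Qed.

End Lift.

Definition NW : {set {perm 'I_n}} := [set mu in Wset n | pb (rho (wmap mu) idm)].

Lemma NW_group : group_set NW.
Proof.
apply: gset_of; first by rewrite inE Wset1 /=; apply/pbP; rewrite -idm_wmap; apply: cref SR_idm.
move=> x y; rewrite inE => /andP [Wx /pbP Hx]; rewrite inE => /andP [Wy /pbP Hy].
rewrite inE (WsetM Wx Wy) /=; apply/pbP.
have H1 := cL (SR_wmap Wy) (SR_wmap Wx) SR_idm Hx.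
rewrite wmapM pc_idm_r in H1.
exact: ctr (SR_wmap (WsetM Wx Wy)) (SR_wmap Wy) SR_idm H1 Hy.
Qed.

Lemma NW_normal : (NW <| Wset n)%g.
Proof.
apply/andP; split; first by apply/subsetP => x; rewrite inE => /andP [].
apply: norm_of => x g; rewrite inE => /andP [Wx /pbP Hx] Wg.
have Wgi := WsetV Wg.
rewrite conjgE mulgA.
have Wc : (g^-1 * x * g)%g \in Wset n by apply: WsetM => //; apply: WsetM.
rewrite inE Wc /=; apply/pbP.
have H1 := cR (SR_wmap Wgi) (SR_wmap Wx) SR_idm Hx.
rewrite wmapM pc_idm_l in H1.
have H2 := cL (SR_wmap Wg) (SR_wmap (WsetM Wgi Wx)) (SR_wmap Wgi) H1.
by rewrite !wmapM mulVg -idm_wmap in H2.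
Qed.

Lemma maxP (Q : nat -> Prop) B : Q 0 -> (forall r, Q r -> r <= B) ->
  exists j, Q j /\ forall r, Q r -> r <= j.
Proof.
move=> Q0; elim: B => [|B IH] HB; first by exists 0.
case: (classic (Q B.+1)) => [HQ|nQ]; first by exists B.+1.
apply: IH => r Hr; have := HB r Hr; rewrite leq_eqVlt => /orP [/eqP E|//].
by rewrite E in Hr.
Qed.

Hypothesis Hnu : nonuniform rho.

Lemma main :
  (exists k : nat, exists N : {group {perm 'I_k}},
     [/\ 1 <= k <= m, (N <| [set: {perm 'I_k}])%g &
         forall s t : pmap_ n, SR s -> SR t -> (rho s t <-> equivS N s t)])
  \/
  (exists N : {group {perm 'I_n}},
     (N <| Wset n)%g /\
     forall s t : pmap_ n, SR s -> SR t -> (rho s t <-> equivW N s t)).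
Proof.
have nU : ~ U.
  move=> HU; case: Hnu => s [t [Ss St Hst]]; apply: Hst.
  exact: ctr Ss SR_zero St (HU s Ss) (csym St SR_zero (HU t St)).
have Znw : forall s, SR s -> rho s pzero ->
    [/\ pinj s, proper_admissible (Defs.dom s) & proper_admissible (img s)].
  move=> s Ss Zs; case: (SR_cases Ss) => // -[w Hw Es].
  by exfalso; apply: nU; apply: (ZW Hw); rewrite -Es.
have F2 : forall s t, SR s -> SR t -> rho s t -> ~ rho s pzero -> Hrel s t.
  move=> s t Ss St H nZ; apply: NNPP => nH.
  by case: (S2 Ss St H nH).
have F3 : forall w t, w \in Wset n -> SR t -> rho (wmap w) t ->
    exists2 w', w' \in Wset n & t = wmap w'.
  move=> w t Hw St H.
  have [Ed _] := F2 _ _ (SR_wmap Hw) St H (fun Z => nU (ZW Hw Z)).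
  case: (SR_cases St) => // -[_ pd _].
  have [c] := pa_notT pd; by rewrite -Ed dom_wmap inE.
have [j [[x [Sx Zx rkx]] jmax]] : exists j, (exists x, [/\ SR x, rho x pzero & rk x = j]) /\
    forall r, (exists x, [/\ SR x, rho x pzero & rk x = r]) -> r <= j.
  apply: maxP (n) _ _; first by exists pzero; split => //; [exact: SR_zero | exact: cref SR_zero |
    by rewrite /rk (_ : Defs.dom pzero = set0) ?cards0 //; apply/setP => z; rewrite domE ffunE inE].
  by move=> r [z [_ _ <-]]; rewrite /rk; have := max_card (Defs.dom z); rewrite card_ord.
have jmax' : forall z, SR z -> rho z pzero -> rk z <= j.
  by move=> z Sz Zz; apply: jmax; exists z.
have [Ix pdx pix] := Znw x Sx Zx.
have jm : j <= m by rewrite -rkx; apply: rk_nonW.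
have Zall : forall y, SR y -> proper_admissible (Defs.dom y) -> proper_admissible (img y) ->
    rk y <= j -> rho y pzero.
  by move=> y Sy pdy piy Hy; apply: (S1 Sx Sy pdx pdy piy) => //; rewrite rkx.
have rkn : forall s : pm, rk s <= n.
  by move=> s; rewrite /rk; have := max_card (Defs.dom s); rewrite card_ord.
case: (ltnP j m) => [jlt|jge].
- left; exists j.+1, (Group (NS_group jlt)); split => //.
  + by apply/andP; split; [apply: subsetT | apply: NS_norm].
  move=> s t Ss St; rewrite /equivS /equiv_gen.
  case: ltnP => [slt|sge].
  + have Hsn : rk s < n by apply: leq_ltn_trans m_lt_n; apply: leq_trans jm.
    have [Is pds pis] := nonW_rk Ss Hsn.
    have Zs : rho s pzero by apply: Zall.
    split => [H|Ht].
    * have Zt : rho t pzero by apply: ctr St Ss SR_zero (csym Ss St H) Zs.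
      by rewrite ltnS; apply: jmax'.
    * have Htn : rk t < n by apply: leq_ltn_trans m_lt_n; apply: leq_trans jm.
      have [It pdt pit] := nonW_rk St Htn.
      have Zt : rho t pzero by apply: Zall.
      exact: ctr Ss SR_zero St Zs (csym St SR_zero Zt).
  case: eqP => [seq|sne].
  + have nZ : ~ rho s pzero by move=> Zs; have := jmax' s Ss Zs; rewrite seq ltnn.
    split => [H|[Hr HS]].
    * have Hr := F2 _ _ Ss St H nZ.
      by split => //; exact: (relS_to jlt Ss St seq Hr H).
    * exact: (relS_from (Hkm := jlt) Ss St seq Hr HS).
  + split => [H|->]; last exact: cref.
    have sgt : j.+1 < rk s by rewrite ltn_neqAle eq_sym; apply/andP; split => //; apply/eqP.
    have nZ : ~ rho s pzero by move=> Zs; have := jmax' s Ss Zs; rewrite leqNgt ltnW.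
    have Hr := F2 _ _ Ss St H nZ.
    case: (SR_cases Ss) => [[ws Hws Es]|[Is pds pis]].
    * have H' : rho (wmap ws) t by rewrite -Es.
      have [wt Hwt Et] := F3 ws t Hws St H'.
      apply: NNPP => nst.
      have nw : ws <> wt by move=> E; apply: nst; rewrite Es Et E.
      have H'' : rho (wmap ws) (wmap wt) by rewrite -Es -Et.
      have [z [Sz _ _ rkz Zz]] := S3W Hws Hwt H'' nw.
      by have := jmax' z Sz Zz; rewrite rkz leqNgt jlt.
    * apply: NNPP => nst.
      have [z [Sz _ _ rkz Zz]] := S3n Ss St pds pis Hr H nst.
      by have := jmax' z Sz Zz; rewrite -ltnS rkz leqNgt sgt.
- right; exists (Group NW_group); split; first exact: NW_normal.
  have jE : j = m by apply/eqP; rewrite eqn_leq jm jge.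
  move=> s t Ss St; rewrite /equivW /equiv_gen.
  case: ltnP => [slt|sge].
  + have [Is pds pis] := nonW_rk Ss slt.
    have Zs : rho s pzero by apply: Zall => //; rewrite jE; apply: rk_nonW.
    split => [H|Htn].
    * have Zt : rho t pzero by apply: ctr St Ss SR_zero (csym Ss St H) Zs.
      have [_ pdt _] := Znw t St Zt.
      by apply: leq_ltn_trans m_lt_n; apply: rk_nonW.
    * have [It pdt pit] := nonW_rk St Htn.
      have Zt : rho t pzero by apply: Zall => //; rewrite jE; apply: rk_nonW.
      exact: ctr Ss SR_zero St Zs (csym St SR_zero Zt).
  case: eqP => [seq|sne]; last first.
    by exfalso; apply: sne; apply/eqP; rewrite eqn_leq rkn sge.
  case: (SR_cases Ss) => [[ws Hws Es]|[Is pds pis]]; last first.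
    by exfalso; have := rk_nonW pds; rewrite seq leqNgt m_lt_n.
  split => [H|[_ [mu Hmu Ht]]].
  + have H' : rho (wmap ws) t by rewrite -Es.
    have [wt Hwt Et] := F3 ws t Hws St H'.
    split; first by rewrite Es Et /Hrel !dom_wmap !img_wmap.
    exists (wt * ws^-1)%g.
    * have Wc : (wt * ws^-1)%g \in Wset n by apply: WsetM => //; apply: WsetV.
      rewrite inE Wc /=; apply/pbP.
      have Swi : SR (wmap (ws^-1)%g) by apply/SR_wmap/WsetV.
      have H1 := cL Swi Ss St H.
      rewrite Es Et wmapV wmapM in H1.
      by apply: csym H1; [exact: SR_idm | apply/SR_wmap].
    * by move=> i; rewrite Es Et !ffunE permM permKV.
  + move: Hmu; rewrite inE => /andP [Wmu /pbP Hmu].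
    have Et : t = Defs.pcomp s (wmap mu) by apply: pm_ext => i; rewrite pcompE ffunE Ht.
    have H1 := cL Ss (SR_wmap Wmu) SR_idm Hmu.
    rewrite -Et pc_idm_r in H1.
    exact: csym St Ss H1.
Qed.

End Basics.

Theorem theorem5p2 (m n : nat) (Hm : 0 < m) (Hn : n = m.*2)
  (rho : pmap_ n -> pmap_ n -> Prop) :
  congruence rho -> nonuniform rho ->
  (exists k : nat, exists N : {group {perm 'I_k}},
     [/\ 1 <= k <= m, (N <| [set: {perm 'I_k}])%g &
         forall s t : pmap_ n, SR s -> SR t -> (rho s t <-> equivS N s t)])
  \/
  (exists N : {group {perm 'I_n}},
     (N <| Wset n)%g /\
     forall s t : pmap_ n, SR s -> SR t -> (rho s t <-> equivW N s t)).
Proof. move=> Hc Hnu; exact: (main Hm Hn Hc Hnu). Qed.
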